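(* Let $f \colon Q \twoheadrightarrow Q'$ be a partial surjection between finite sets. Then for every simple type $A$, $\mathrm{Reg}_{Q'}(A) \subseteq \mathrm{Reg}_Q(A)$ (as Boolean subalgebras of $\wp(\Lambda(A))$).
   Context: Simple types are generated from a base type $o$ by $\Rightarrow$; $\Lambda(A)$ is the set of closed simply typed $\lambda$-terms of type $A$ modulo $\beta\eta$. For a finite set $Q$: $[\![o]\!]_Q = Q$, $[\![A\Rightarrow B]\!]_Q$ = all functions $[\![A]\!]_Q \to [\![B]\!]_Q$, and $[\![M]\!]_Q \in [\![A]\!]_Q$ is the standard interpretation of $M$. $\mathrm{Reg}_Q(A) = \{\{M \in \Lambda(A) : [\![M]\!]_Q \in F\} : F \subseteq [\![A]\!]_Q\}$. A partial surjection $f \colon Q \twoheadrightarrow Q'$ is a relation that is the graph of a partial function surjective onto $Q'$. *)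

(* Defs.v *)
From mathcomp Require Import all_boot.
Set Implicit Arguments. Unset Strict Implicit. Unset Printing Implicit Defensive.

Inductive ty : Type := o : ty | arr : ty -> ty -> ty.

Inductive var : list ty -> ty -> Type :=
| Vz : forall G A, var (A :: G) A
| Vs : forall G A B, var G A -> var (B :: G) A.

Inductive tm : list ty -> ty -> Type :=
| tvar : forall G A, var G A -> tm G A
| tlam : forall G A B, tm (A :: G) B -> tm G (arr A B)
| tapp : forall G A B, tm G (arr A B) -> tm G A -> tm G B.

(* Closed terms of type A (raw, not quotiented). *)
Definition closed_tm (A : ty) := tm nil A.

Section Sem.
Variable Q : finType.

Fixpoint sem (A : ty) : Type :=
  match A with o => Q | arr A B => sem A -> sem B end.

Fixpoint env (G : list ty) : Type :=
  match G with nil => unit | A :: G => (sem A * env G)%type end.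

Fixpoint lookup G A (v : var G A) : env G -> sem A :=
  match v in var G A return env G -> sem A with
  | Vz _ _ => fun e => fst e
  | Vs _ _ _ v' => fun e => lookup v' (snd e)
  end.

Fixpoint eval G A (M : tm G A) : env G -> sem A :=
  match M in tm G A return env G -> sem A with
  | tvar _ _ v => lookup v
  | tlam _ _ _ M => fun e x => eval M (x, e)
  | tapp _ _ _ M N => fun e => eval M e (eval N e)
  end.

Definition interp A (M : closed_tm A) : sem A := eval M tt.

Definition Reg (A : ty) (L : closed_tm A -> Prop) : Prop :=
  exists F : sem A -> Prop, forall M : closed_tm A, L M <-> F (interp M).
End Sem.

Definition partial_surjection (Q Q' : finType) (f : Q -> Q' -> Prop) : Prop :=
  (forall q a b, f q a -> f q b -> a = b) /\ (forall q', exists q, f q q').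

(* Main.v *)
Require Import Defs.
From mathcomp Require Import all_boot.
From Stdlib Require Import Classical ClassicalEpsilon FunctionalExtensionality.

Section LR.
Variables (Q Q' : finType) (f : Q -> Q' -> Prop).

Fixpoint LR (A : ty) : sem Q A -> sem Q' A -> Prop :=
  match A return sem Q A -> sem Q' A -> Prop with
  | o => fun x y => f x y
  | arr A B => fun g g' => forall x x', LR A x x' -> LR B (g x) (g' x')
  end.

Fixpoint Renv (G : list ty) : env Q G -> env Q' G -> Prop :=
  match G return env Q G -> env Q' G -> Prop with
  | nil => fun _ _ => True
  | A :: G => fun e e' => LR A e.1 e'.1 /\ Renv G e.2 e'.2
  end.

Lemma lookup_LR G A (v : var G A) : forall e e', Renv G e e' ->
  LR A (lookup v e) (lookup v e').
Proof.
elim: v => [G0 A0|G0 A0 B0 v IH] e e' /= [H1 H2]; first exact H1.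
exact: IH.
Qed.

Lemma eval_LR G A (M : tm G A) : forall e e', Renv G e e' ->
  LR A (eval M e) (eval M e').
Proof.
elim: M => [G0 A0 v|G0 A0 B0 M IH|G0 A0 B0 M IHM N IHN] e e' He /=.
- exact: lookup_LR.
- move=> x x' Hx; apply: IH => /=; by split.
- exact: (IHM e e' He _ _ (IHN e e' He)).
Qed.

Fixpoint konst (q : Q) (B : ty) : sem Q B :=
  match B return sem Q B with
  | o => q
  | arr _ B => fun _ => konst q B
  end.

Lemma eqinh (HQ : Q -> False) (HQ' : Q' -> False) (T : ty) :
  inhabited (sem Q T) <-> inhabited (sem Q' T).
Proof.
elim: T => [|A IHA B IHB] /=.
  by split=> [[x]|[x]]; [case: (HQ x)|case: (HQ' x)].
split=> [[h]|[h]].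
- case: (classic (inhabited (sem Q' A))) => [[a']|Hn].
  + have [a] := proj2 IHA (inhabits a').
    have [b'] := proj1 IHB (inhabits (h a)).
    by constructor; exact (fun _ => b').
  + by constructor => a'; case: (Hn (inhabits a')).
- case: (classic (inhabited (sem Q A))) => [[a]|Hn].
  + have [a'] := proj1 IHA (inhabits a).
    have [b] := proj2 IHB (inhabits (h a')).
    by constructor; exact (fun _ => b).
  + by constructor => a; case: (Hn (inhabits a)).
Qed.

Hypothesis Hf : partial_surjection f.

Lemma LR_fs (T : ty) :
  (forall y y1 y2, LR T y y1 -> LR T y y2 -> y1 = y2) /\
  (forall y', exists y, LR T y y').
Proof.
case: Hf => Hfun Hsur.
elim: T => [|A [IHAf IHAs] B [IHBf IHBs]] /=; first by split; [exact Hfun|exact Hsur].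
split.
- move=> g g1 g2 H1 H2; apply: functional_extensionality => x'.
  have [x Hx] := IHAs x'.
  exact: IHBf (H1 _ _ Hx) (H2 _ _ Hx).
- move=> g'.
  have Hex : forall x : sem Q A, exists y : sem Q B,
      forall x', LR A x x' -> LR B y (g' x').
    move=> x.
    case: (classic (exists x', LR A x x')) => [[x' Hx']|Hn].
      have [y Hy] := IHBs (g' x').
      exists y => x'' Hx''.
      by rewrite -(IHAf _ _ _ Hx' Hx'').
    have [y] : inhabited (sem Q B).
      case: (pickP (fun _ : Q => true)) => [q _|Hq].
        by constructor; exact (konst q B).
      have HQ : Q -> False by move=> q; have := Hq q.
      have HQ' : Q' -> False by move=> q'; have [q _] := Hsur q'; exact: HQ q.
      have [x'] := proj1 (eqinh HQ HQ' A) (inhabits x).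
      exact: proj2 (eqinh HQ HQ' B) (inhabits (g' x')).
    exists y => x' Hx'; case: Hn; by exists x'.
  exists (fun x => proj1_sig (constructive_indefinite_description _ (Hex x))).
  move=> x x' Hx.
  exact: (proj2_sig (constructive_indefinite_description _ (Hex x))).
Qed.

End LR.

Theorem mainTheorem4 (Q Q' : finType) (f : Q -> Q' -> Prop) :
  partial_surjection f ->
  forall (A : ty) (L : closed_tm A -> Prop), Reg Q' L -> Reg Q L.
Proof.
move=> Hf A L [F' HF'].
exists (fun x => exists x', @LR Q Q' f A x x' /\ F' x') => M.
have HM : @LR Q Q' f A (interp Q M) (interp Q' M) by exact: eval_LR.
rewrite HF'; split.
- by move=> H; exists (interp Q' M).
- move=> [x' [Hx H]].
  by rewrite (proj1 (@LR_fs Q Q' f Hf A) _ _ _ HM Hx).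
Qed.
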